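(* For positive integers $n$ and $i$ with $n\ge(2i)^{100}$, $$F(n,i)\le\frac{i^{2n+i}}{n^{(i-1)/2}}.$$
   Context: For positive integers $m,i$, $F(m,i):=\sum_{v_1,\dots,v_i\in\mathbb Z_{\ge0},\ v_1+\cdots+v_i=m}\binom{m}{v_1,\dots,v_i}^2$, where $\binom{m}{v_1,\dots,v_i}=\frac{m!}{v_1!\cdots v_i!}$ is the multinomial coefficient. *)

(* Defs.v *)
From mathcomp Require Import all_boot.

(* Multinomial coefficient m! / (v_1! ... v_i!) for v : 'I_i -> nat with sum m.
   (The division is exact when \sum_j v j = m.) *)
Definition multinom {m i : nat} (v : {ffun 'I_i -> 'I_m.+1}) : nat :=
  m`! %/ \prod_(j < i) (v j)`!.

(* F(m,i) = sum over (v_1,...,v_i) in Z_{>=0}^i with v_1+...+v_i = m of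
   the squared multinomial coefficient. Each v_j <= m, so ranging over
   'I_m.+1 loses nothing. *)
Definition F (m i : nat) : nat :=
  \sum_(v : {ffun 'I_i -> 'I_m.+1} | \sum_(j < i) (v j : nat) == m)
     (multinom (m:=m) (i:=i) v) ^ 2.

(* Main.v *)
Require Import Defs.
From Stdlib Require Import Reals Lra Lia Factorial.
From Coquelicot Require Coquelicot.
From mathcomp Require all_boot all_order all_algebra zify ring.
Open Scope R_scope.

Module Ana.
Import Coquelicot.Coquelicot.
Local Open Scope R_scope.
Lemma ln_low x : 0 < x -> 2*x/(2+x) <= ln (1+x).
Proof.
intros Hx.
destruct (MVT_cor2 (fun t => ln (1+t) - 2*t/(2+t)) (fun t => t^2/((1+t)*(2+t)^2)) 0 x Hx) as [c [Hc1 Hc2]].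
- intros c Hc. apply is_derive_Reals. auto_derive.
  + lra.
  + field. lra.
- assert (0 <= c ^ 2 / ((1 + c) * (2 + c) ^ 2) * (x - 0)).
  { apply Rmult_le_pos; [|lra]. apply Rdiv_le_0_compat; [nra|]. apply Rmult_lt_0_compat; [lra|]. apply pow_lt; lra. }
  rewrite Rplus_0_r, ln_1, Rmult_0_r, Rdiv_0_l in Hc1. lra.
Qed.
Lemma ln_up x : 0 < x -> ln (1+x) <= x - x^2/2 + x^3/3.
Proof.
intros Hx.
destruct (MVT_cor2 (fun t => t - t^2/2 + t^3/3 - ln (1+t)) (fun t => t^3/(1+t)) 0 x Hx) as [c [Hc1 Hc2]].
- intros c Hc. apply is_derive_Reals. auto_derive.
  + lra.
  + field. lra.
- assert (0 <= c ^ 3 / (1 + c) * (x - 0)).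
  { apply Rmult_le_pos; [|lra]. apply Rdiv_le_0_compat; [apply pow_le; lra|lra]. }
  rewrite Rplus_0_r, ln_1 in Hc1. lra.
Qed.

Lemma pow_exp_ln x k : 0 < x -> x ^ k = exp (INR k * ln x).
Proof. intros Hx. rewrite <- ln_pow by lra. rewrite exp_ln; [reflexivity|apply pow_lt; lra]. Qed.

Lemma exp_le x y : x <= y -> exp x <= exp y.
Proof. intros [H|H]; [left; apply exp_increasing; exact H| subst; lra]. Qed.

Lemma E2_le n : (1 <= n)%nat -> exp 2 <= (1 + 1 / INR n) ^ (2*n+1).
Proof.
intros Hn. assert (HN : 1 <= INR n) by (apply (le_INR 1); lia).
assert (Hx : 0 < 1 / INR n) by (apply Rdiv_lt_0_compat; lra).
rewrite pow_exp_ln by lra. apply exp_le.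
pose proof (ln_low _ Hx) as H.
rewrite plus_INR, mult_INR. simpl INR at 1 3.
apply Rle_trans with ((2 * INR n + 1) * (2 * (1 / INR n) / (2 + 1 / INR n))).
- right. field. lra.
- apply Rmult_le_compat_l; lra.
Qed.

Lemma E2_ge n : (1 <= n)%nat -> (1 + 1 / INR n) ^ (2*n+1) <= exp (2 + 1 / (INR n * (INR n + 1))).
Proof.
intros Hn. assert (HN : 1 <= INR n) by (apply (le_INR 1); lia).
assert (Hx : 0 < 1 / INR n) by (apply Rdiv_lt_0_compat; lra).
rewrite pow_exp_ln by lra. apply exp_le.
pose proof (ln_up _ Hx) as H.
rewrite plus_INR, mult_INR. simpl INR at 1 3.
apply Rle_trans with ((2 * INR n + 1) * (1 / INR n - (1/INR n)^2/2 + (1/INR n)^3/3)).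
- apply Rmult_le_compat_l; lra.
- set (m := INR n) in *.
  assert (E : (2 * m + 1) * (1 / m - (1 / m) ^ 2 / 2 + (1 / m) ^ 3 / 3) = 2 + (1/(6*m^2) + 1/(3*m^3))) by (field; lra).
  rewrite E. apply Rplus_le_compat_l.
  assert (E2 : 1 / (6 * m ^ 2) + 1 / (3 * m ^ 3) = (m + 2) / (6 * m^3)) by (field; lra).
  rewrite E2.
  assert (E3: 1/(m*(m+1)) - (m+2)/(6*m^3) = (5*m^2 - 3*m - 2)/(6*m^3*(m+1))) by (field; lra).
  assert (0 < m^3) by (apply pow_lt; lra).
  assert (0 <= (5*m^2 - 3*m - 2)/(6*m^3*(m+1))) by (apply Rdiv_le_0_compat; nra).
  lra.
Qed.

Lemma pow_1n N k : 0 < N -> (1 + 1/N)^k * N^k = (N+1)^k.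
Proof. intros. rewrite <- Rpow_mult_distr. f_equal. field. lra. Qed.

Lemma St_up n : (1 <= n)%nat -> INR (fact n) ^ 2 * exp (2 * INR n) <= exp 2 * INR n ^ (2*n+1).
Proof.
intros Hn. destruct n as [|k]; [lia|]. clear Hn.
induction k as [|k IH].
- simpl. replace (2*1) with 2 by ring. lra.
- set (m := S k) in *.
  assert (HN : 1 <= INR m) by (apply (le_INR 1); unfold m; lia).
  change (fact (S m)) with (S m * fact m)%nat.
  rewrite mult_INR, S_INR.
  replace (2 * S m + 1)%nat with ((2*m+1) + 2)%nat by lia.
  rewrite pow_add.
  replace (2 * (INR m + 1)) with (2 * INR m + 2) by ring.
  rewrite exp_plus.
  pose proof (E2_le m ltac:(unfold m; lia)) as H2.
  rewrite <- (pow_1n (INR m) (2*m+1)) by lra.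
  assert (0 < exp 2) by apply exp_pos.
  assert (0 < INR m ^ (2*m+1)) by (apply pow_lt; lra).
  set (A := INR (fact m)) in *. set (X := (1 + 1 / INR m) ^ (2 * m + 1)) in *.
  set (P := INR m ^ (2*m+1)) in *. set (E := exp (2 * INR m)) in *. set (e2 := exp 2) in *.
  assert (e2 * P <= X * P) by (apply Rmult_le_compat_r; lra).
  assert (0 <= (INR m + 1)^2) by (apply pow_le; lra).
  replace ((INR m + 1) * A) with (A * (INR m + 1)) by ring.
  rewrite Rpow_mult_distr.
  apply Rle_trans with ((INR m + 1)^2 * e2 * (e2 * P)).
  + replace ((A ^ 2 * (INR m + 1) ^ 2) * (E * e2)) with ((INR m + 1)^2 * e2 * (A^2 * E)) by ring.
    apply Rmult_le_compat_l; [nra|exact IH].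
  + replace (e2 * (X * P * (INR m + 1) ^ 2)) with ((INR m + 1)^2 * e2 * (X * P)) by ring.
    apply Rmult_le_compat_l; [nra|lra].
Qed.

Lemma St_low n : (1 <= n)%nat -> exp (1 + 1 / INR n) * INR n ^ (2*n+1) <= INR (fact n) ^ 2 * exp (2 * INR n).
Proof.
intros Hn. destruct n as [|k]; [lia|]. clear Hn.
induction k as [|k IH].
- simpl. replace (1 + 1/1) with 2 by field. replace (2*1) with 2 by ring. lra.
- set (m := S k) in *.
  assert (HN : 1 <= INR m) by (apply (le_INR 1); unfold m; lia).
  change (fact (S m)) with (S m * fact m)%nat.
  rewrite mult_INR, S_INR.
  replace (2 * S m + 1)%nat with ((2*m+1) + 2)%nat by lia.
  rewrite pow_add.
  replace (2 * (INR m + 1)) with (2 * INR m + 2) by ring.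
  rewrite (exp_plus (2 * INR m) 2).
  pose proof (E2_ge m ltac:(unfold m; lia)) as H2.
  rewrite <- (pow_1n (INR m) (2*m+1)) by lra.
  assert (0 < exp 2) by apply exp_pos.
  assert (0 < INR m ^ (2*m+1)) by (apply pow_lt; lra).
  assert (Ee : exp (1 + 1 / (INR m + 1)) * exp (2 + 1 / (INR m * (INR m + 1))) = exp (1 + 1 / INR m) * exp 2).
  { rewrite <- !exp_plus. f_equal. field. lra. }
  set (A := INR (fact m)) in *. set (X := (1 + 1 / INR m) ^ (2 * m + 1)) in *.
  set (P := INR m ^ (2*m+1)) in *. set (E := exp (2 * INR m)) in *. set (e2 := exp 2) in *.
  assert (0 <= (INR m + 1)^2) by (apply pow_le; lra).
  assert (0 < exp (1 + 1 / (INR m + 1))) by apply exp_pos.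
  replace ((INR m + 1) * A) with (A * (INR m + 1)) by ring.
  rewrite Rpow_mult_distr.
  apply Rle_trans with ((INR m + 1)^2 * e2 * (exp (1 + 1 / INR m) * P)).
  + replace (exp (1 + 1 / (INR m + 1)) * (X * P * (INR m + 1) ^ 2)) with
      ((INR m + 1)^2 * P * (exp (1 + 1 / (INR m + 1)) * X)) by ring.
    replace ((INR m + 1)^2 * e2 * (exp (1 + 1 / INR m) * P)) with
      ((INR m + 1)^2 * P * (exp (1 + 1 / (INR m + 1)) * exp (2 + 1 / (INR m * (INR m + 1))))) by (rewrite Ee; ring).
    apply Rmult_le_compat_l; [nra|]. apply Rmult_le_compat_l; lra.
  + replace ((A ^ 2 * (INR m + 1) ^ 2) * (E * e2)) with ((INR m + 1)^2 * e2 * (A^2 * E)) by ring.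
    apply Rmult_le_compat_l; [nra|exact IH].
Qed.

Lemma exp_pow x k : exp x ^ k = exp (INR k * x).
Proof. rewrite pow_exp_ln by apply exp_pos. rewrite ln_exp. reflexivity. Qed.

Lemma K1 N M R k : 0 < M -> 0 <= R -> N = M + R -> INR k * (R / M) = R -> N ^ k <= exp R * M ^ k.
Proof.
intros HM HR HN Hk.
assert (E : N = M * (1 + R / M)) by (rewrite HN; field; lra).
rewrite E, Rpow_mult_distr, Rmult_comm. apply Rmult_le_compat_r; [apply pow_le; lra|].
replace (exp R) with (exp (INR k * (R / M))) by (rewrite Hk; reflexivity).
rewrite <- exp_pow. apply pow_incr. split.
- assert (0 <= R / M) by (apply Rdiv_le_0_compat; lra). lra.
- destruct (Req_dec (R/M) 0) as [Z|Z].
  + rewrite Z, exp_0. lra.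
  + left. apply exp_ineq1. exact Z.
Qed.

Lemma final_alg (n i q r D Fv : nat) :
  (2 <= i)%nat -> (1 <= q)%nat -> n = (q*i + r)%nat -> (r < i)%nat ->
  (Fv <= D * i^n)%nat -> (D * (fact q ^ i * (S q)^r) <= fact n)%nat ->
  INR Fv ^ 2 * INR n ^ (i-1) <= (INR i ^ (2*n+i)) ^ 2.
Proof.
intros Hi Hq Hn Hr HF HD.
assert (HFr : INR Fv <= INR D * INR i ^ n) by (rewrite <- pow_INR, <- mult_INR; apply le_INR; exact HF).
assert (HDr : INR D * (INR (fact q) ^ i * (INR q + 1) ^ r) <= INR (fact n)).
{ rewrite <- S_INR, <- !pow_INR, <- !mult_INR. apply le_INR. exact HD. }
assert (Hn1 : (1 <= n)%nat) by (rewrite Hn; pose proof (Nat.mul_le_mono 1 q 1 i); lia).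
pose proof (St_up n Hn1) as SU. pose proof (St_low q Hq) as SL.
set (N := INR n) in *. set (I := INR i) in *. set (Q := INR q) in *. set (Rr := INR r).
set (Fr := INR Fv) in *. set (Dr := INR D) in *. set (A := INR (fact n)) in *. set (Fq := INR (fact q)) in *.
assert (HQ : 1 <= Q) by (apply (le_INR 1); exact Hq).
assert (HI : 2 <= I) by (apply (le_INR 2); exact Hi).
assert (HR : 0 <= Rr) by apply pos_INR.
assert (HNr : N = Q * I + Rr) by (unfold N, Q, I, Rr; rewrite Hn, plus_INR, mult_INR; ring).
assert (HRI : Rr < I) by (apply lt_INR; exact Hr).
assert (Fr0 : 0 <= Fr) by apply pos_INR.
assert (Dr0 : 0 <= Dr) by apply pos_INR.
assert (Fq0 : 0 < Fq) by (apply lt_0_INR, lt_O_fact).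
assert (Bq0 : 0 < Fq ^ i * (Q + 1) ^ r) by (apply Rmult_lt_0_compat; apply pow_lt; lra).
set (Bq := Fq ^ i * (Q + 1) ^ r) in *.
assert (S1 : (Fr * Bq) ^ 2 <= (A * I ^ n) ^ 2).
{ apply pow_incr. split; [apply Rmult_le_pos; lra|].
  apply Rle_trans with (Dr * I ^ n * Bq); [apply Rmult_le_compat_r; lra|].
  replace (Dr * I ^ n * Bq) with (Dr * Bq * I^n) by ring.
  apply Rmult_le_compat_r; [apply pow_le; lra | exact HDr]. }
rewrite !Rpow_mult_distr in S1.
assert (Hq1 : (1 <= q)%nat) by exact Hq.
assert (EIn : I ^ n = I ^ (q*i) * I ^ r) by (rewrite Hn, pow_add; reflexivity).
assert (EN : N ^ (2*n+1) = (N ^ (q*i))^2 * (N ^ r)^2 * N).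
{ rewrite <- !pow_mult. replace (2*n+1)%nat with ((q*i*2 + r*2) + 1)%nat by lia. rewrite !pow_add. ring. }
assert (Eexp : exp (2 * N) = exp (2 * Q) ^ i * (exp Rr)^2).
{ rewrite !exp_pow, <- exp_plus. f_equal. rewrite HNr. fold I. simpl INR. ring. }
assert (EBq : Bq ^ 2 = (Fq^2)^i * ((Q+1)^r)^2).
{ unfold Bq. rewrite Rpow_mult_distr, <- !pow_mult. replace (i*2)%nat with (2*i)%nat by lia. reflexivity. }
set (L := exp 1 * Q ^ (2*q+1)).
assert (HL : 0 <= L ^ i <= (Fq ^ 2 * exp (2 * Q)) ^ i).
{ split; [apply pow_le; unfold L; apply Rmult_le_pos; [left; apply exp_pos|apply pow_le; lra]|].
  apply pow_incr. split; [unfold L; apply Rmult_le_pos; [left; apply exp_pos|apply pow_le; lra]|].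
  apply Rle_trans with (exp (1 + 1/Q) * Q ^ (2*q+1)); [|exact SL].
  apply Rmult_le_compat_r; [apply pow_le; lra|]. apply exp_le.
  assert (0 < 1/Q) by (apply Rdiv_lt_0_compat; lra). lra. }
set (T := (Q+1)^r). set (H := exp Rr). set (g := exp 2).
assert (T0 : 0 < T) by (apply pow_lt; lra).
assert (H0 : 0 < H) by apply exp_pos.
assert (g0 : 0 < g) by apply exp_pos.
assert (N1 : 1 <= N) by (apply (le_INR 1); exact Hn1).
assert (S3 : Fr^2 * L^i * T^2 * H^2 <= g * ((N ^ (q*i))^2 * (N ^ r)^2 * N) * (I^n)^2).
{ apply Rle_trans with (Fr^2 * Bq^2 * exp (2*N)).
  { rewrite EBq, Eexp. fold T. fold H.
    replace (Fr ^ 2 * ((Fq ^ 2) ^ i * T ^ 2) * (exp (2 * Q) ^ i * H ^ 2))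
      with (Fr^2 * T^2 * H^2 * (Fq ^ 2 * exp (2 * Q)) ^ i) by (rewrite Rpow_mult_distr; ring).
    replace (Fr ^ 2 * L ^ i * T ^ 2 * H ^ 2) with (Fr^2 * T^2 * H^2 * L^i) by ring.
    apply Rmult_le_compat_l; [|apply HL].
    apply Rmult_le_pos; [apply Rmult_le_pos|]; apply pow_le; lra. }
  rewrite <- EN.
  apply Rle_trans with (A^2 * (I^n)^2 * exp (2 * N)).
  { apply Rmult_le_compat_r; [left; apply exp_pos| exact S1]. }
  replace (A ^ 2 * (I ^ n) ^ 2 * exp (2 * N)) with ((I^n)^2 * (A ^ 2 * exp (2 * N))) by ring.
  replace (g * N ^ (2 * n + 1) * (I ^ n) ^ 2) with ((I^n)^2 * (g * N ^ (2 * n + 1))) by ring.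
  apply Rmult_le_compat_l; [apply pow_le; apply pow_le; lra| exact SU]. }
assert (QI0 : 0 < Q * I) by nra.
assert (K1a : N ^ (q*i) <= H * (Q*I)^(q*i)).
{ apply K1; try lra. rewrite mult_INR. fold Q I. field. lra. }
assert (K2a : N ^ r <= I ^ r * T).
{ unfold T. rewrite <- Rpow_mult_distr. apply pow_incr. split; lra. }
assert (S4 : (N ^ (q*i))^2 * (N ^ r)^2 * N <= H^2 * ((Q*I)^(q*i))^2 * ((I^r)^2 * T^2) * N).
{ apply Rmult_le_compat_r; [lra|].
  replace (H ^ 2 * ((Q * I) ^ (q * i)) ^ 2 * ((I ^ r) ^ 2 * T ^ 2)) with ((H * (Q*I)^(q*i))^2 * (I^r * T)^2) by ring.
  apply Rmult_le_compat; try (apply pow_le; apply pow_le; lra).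
  - apply pow_incr; split; [apply pow_le; lra| exact K1a].
  - apply pow_incr; split; [apply pow_le; lra| exact K2a]. }
assert (EQ2 : L^i = exp 1 ^ i * (Q^(q*i))^2 * Q^i).
{ unfold L. rewrite Rpow_mult_distr, <- !pow_mult, Rmult_assoc, <- pow_add. f_equal. f_equal. lia. }
assert (S5 : Fr^2 * exp 1 ^ i * Q ^ i <= g * N * ((I^n)^2)^2).
{ assert (Qu : 0 < (Q^(q*i))^2) by (apply pow_lt; apply pow_lt; lra).
  apply Rmult_le_reg_r with (T^2 * H^2 * (Q^(q*i))^2).
  { apply Rmult_lt_0_compat; [apply Rmult_lt_0_compat; apply pow_lt; lra | exact Qu]. }
  apply Rle_trans with (Fr^2 * L^i * T^2 * H^2).
  { right. rewrite EQ2. ring. }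
  eapply Rle_trans; [exact S3|].
  apply Rle_trans with (g * (H^2 * ((Q*I)^(q*i))^2 * ((I^r)^2 * T^2) * N) * (I^n)^2).
  { apply Rmult_le_compat_r; [apply pow_le; apply pow_le; lra|].
    apply Rmult_le_compat_l; [lra|exact S4]. }
  right. rewrite EIn. rewrite !Rpow_mult_distr. ring. }
set (e := exp 1) in *.
assert (e1 : 1 <= e) by (unfold e; pose proof (exp_le 0 1 ltac:(lra)) as Z; rewrite exp_0 in Z; exact Z).
assert (Eg : g = e^2) by (unfold g, e; rewrite exp_pow; f_equal; simpl; ring).
assert (G2 : g * 2^i <= e^i * I^i).
{ destruct (Nat.le_exists_sub 2 i Hi) as [m [Hm _]]. rewrite Hm, Eg, !pow_add.
  assert (1 <= e^m) by (apply pow_R1_Rle; lra).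
  assert (2^m <= I^m) by (apply pow_incr; lra).
  assert (0 < 2^m) by (apply pow_lt; lra).
  assert (0 < e^2) by (apply pow_lt; lra).
  replace (e ^ m * e ^ 2 * (I ^ m * I ^ 2)) with (e^2 * ((e^m * I^m) * I^2)) by ring.
  apply Rmult_le_compat_l; [lra|].
  apply Rmult_le_compat; try lra.
  - apply Rle_trans with (1 * I^m); [lra|]. apply Rmult_le_compat_r; lra.
  - simpl. nra. }
assert (Ni : N ^ i <= 2^i * I^i * Q^i).
{ rewrite <- !Rpow_mult_distr. apply pow_incr. split; [lra|]. nra. }
assert (ENi : N ^ i = N^(i-1) * N) by (replace i with (S (i-1)) at 1 by lia; simpl; ring).
assert (ERHS : (I ^ (2 * n + i)) ^ 2 = ((I^n)^2)^2 * (I^i)^2).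
{ rewrite <- !pow_mult, <- pow_add. f_equal. lia. }
rewrite ERHS.
assert (P0 : 0 < e^i * Q^i) by (apply Rmult_lt_0_compat; apply pow_lt; lra).
apply Rmult_le_reg_r with (e^i * Q^i); [exact P0|].
assert (Nc : 0 <= N^(i-1)) by (apply pow_le; lra).
apply Rle_trans with (N^(i-1) * (g * N * ((I^n)^2)^2)).
{ replace (Fr ^ 2 * N ^ (i - 1) * (e ^ i * Q ^ i)) with (N^(i-1) * (Fr ^ 2 * e ^ i * Q ^ i)) by ring.
  apply Rmult_le_compat_l; [exact Nc| exact S5]. }
replace (N ^ (i - 1) * (g * N * ((I ^ n) ^ 2) ^ 2)) with (g * N^i * ((I ^ n) ^ 2) ^ 2) by (rewrite ENi; ring).
assert (I4 : 0 <= ((I ^ n) ^ 2) ^ 2) by (apply pow_le; apply pow_le; apply pow_le; lra).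
apply Rle_trans with (g * (2^i * I^i * Q^i) * ((I ^ n) ^ 2) ^ 2).
{ apply Rmult_le_compat_r; [exact I4|]. apply Rmult_le_compat_l; lra. }
replace (g * (2 ^ i * I ^ i * Q ^ i) * ((I ^ n) ^ 2) ^ 2) with ((g * 2^i) * (I^i * Q^i * ((I ^ n) ^ 2) ^ 2)) by ring.
replace (((I ^ n) ^ 2) ^ 2 * (I ^ i) ^ 2 * (e ^ i * Q ^ i)) with ((e^i * I^i) * (I^i * Q^i * ((I ^ n) ^ 2) ^ 2)) by ring.
apply Rmult_le_compat_r; [|exact G2].
apply Rmult_le_pos; [apply Rmult_le_pos; apply pow_le; lra| exact I4].
Qed.
End Ana.

Module Comb.
Import all_boot all_order all_algebra zify ring.
#[local] Set Implicit Arguments. #[local] Unset Strict Implicit.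
Local Close Scope R_scope.
Local Open Scope nat_scope.
Import Order.TTheory GRing.Theory Num.Theory.

Section Upd.
Variables (N i : nat).
Definition upd (v : {ffun 'I_i -> 'I_N.+1}) (j : 'I_i) (x : nat) : {ffun 'I_i -> 'I_N.+1} :=
  [ffun k => if k == j then inord x else v k].

Lemma upd_j v j x : x <= N -> (upd v j x j : nat) = x.
Proof. by move=> hx; rewrite ffunE eqxx inordK. Qed.

Lemma upd_k v j x k : k != j -> upd v j x k = v k.
Proof. by move=> hk; rewrite ffunE (negbTE hk). Qed.

Lemma sum_upd v j x : x <= N ->
  \sum_k (upd v j x k : nat) + v j = \sum_k (v k : nat) + x.
Proof.
move=> hx; rewrite (bigD1 j) //= [in RHS](bigD1 j) //= upd_j //.
rewrite (eq_bigr (fun k => (v k : nat))); last by move=> k hk; rewrite upd_k.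
set S := \sum_(k | k != j) (v k : nat); lia.
Qed.

Lemma prod_upd v j x : x <= N ->
  \prod_k (upd v j x k)`! * (v j)`! = \prod_k (v k)`! * x`!.
Proof.
move=> hx; rewrite (bigD1 j) //= [in RHS](bigD1 j) //= upd_j //.
rewrite (eq_bigr (fun k => (v k)`!)); last by move=> k hk; rewrite upd_k.
set S := \prod_(k | k != j) (v k)`!; lia.
Qed.

Lemma upd_same v j : upd v j (v j) = v.
Proof. apply/ffunP => k; rewrite ffunE; case: eqP => [->|//]; apply: val_inj; by rewrite /= inordK. Qed.

Lemma upd_upd v j x y : upd (upd v j x) j y = upd v j y.
Proof. apply/ffunP => k; rewrite !ffunE; by case: eqP. Qed.

Lemma prod_gt0 (v : {ffun 'I_i -> 'I_N.+1}) : 0 < \prod_k (v k)`!.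
Proof. by apply: prodn_gt0 => k; apply: fact_gt0. Qed.

End Upd.

Definition Bf (i m : nat) := \prod_(t < m) (t %/ i).+1.

Lemma Bf_S i m : Bf i m.+1 = Bf i m * (m %/ i).+1.
Proof. by rewrite /Bf big_ord_recr. Qed.

Lemma Bf_gt0 i m : 0 < Bf i m.
Proof. by apply: prodn_gt0. Qed.

Lemma B1 N i' m : forall (v : {ffun 'I_i'.+1 -> 'I_N.+1}),
  \sum_k (v k : nat) = m -> Bf i'.+1 m <= \prod_k (v k)`!.
Proof.
elim: m => [|m IH] v hv.
  by rewrite /Bf big_ord0 prod_gt0.
have [a _ Ha] := @arg_maxnP _ ord0 xpredT (fun k => (v k : nat)) isT.
have hsum : \sum_k (v k : nat) <= i'.+1 * v a.
  have -> : i'.+1 * v a = \sum_(k < i'.+1) (v a : nat) by rewrite sum_nat_const card_ord.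
  by apply: leq_sum => k _; apply: Ha.
have va_pos : 0 < v a by lia.
have hx : (v a : nat) = (v a).-1.+1 by rewrite prednK.
move: hx; set x := (v a).-1 => hx.
have haN : x <= N by have := ltn_ord (v a); lia.
set u := upd v a x.
have hu : \sum_k (u k : nat) = m.
  have := sum_upd v a haN. rewrite hv -/u. lia.
have hp := prod_upd v a haN.
have hp2 : \prod_k (v k)`! = \prod_k (u k)`! * v a.
  apply/eqP; rewrite -(eqn_pmul2r (fact_gt0 x)) -hp -/u hx factS; apply/eqP. rewrite -hx. lia.
rewrite Bf_S hp2; apply: leq_mul; first exact: IH.
have : m.+1 <= i'.+1 * v a by lia.
move=> h; rewrite -(ltn_pmul2r (ltn0Sn i')); apply: leq_ltn_trans (leq_trunc_div _ _) _; by rewrite mulnC.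
Qed.

Lemma Bf_val i q : 0 < i -> forall r, r <= i -> Bf i (q * i + r) = q`! ^ i * q.+1 ^ r.
Proof.
move=> ipos; elim: q => [|q IHq] r hr.
  elim: r hr => [|r IHr] hr; first by rewrite /Bf big_ord0 fact0 exp1n.
  rewrite mul0n add0n in IHr *; rewrite Bf_S IHr; last lia.
  rewrite divn_small; last lia. by rewrite fact0 !exp1n.
elim: r hr => [|r IHr] hr.
  have -> : q.+1 * i + 0 = q * i + i by lia.
  by rewrite IHq // factS expnMn expn0 muln1 mulnC.
have -> : q.+1 * i + r.+1 = (q.+1 * i + r).+1 by lia.
rewrite Bf_S IHr; last lia.
rewrite divnMDl // divn_small; last lia.
by rewrite addn0 expnS [q.+2 * _]mulnC mulnA.
Qed.

Lemma coord_le_sum N i (v : {ffun 'I_i -> 'I_N.+1}) j : (v j : nat) <= \sum_k (v k : nat).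
Proof. by rewrite (bigD1 j) //= leq_addr. Qed.

Section SumS.
Variables (N i : nat).
Local Open Scope ring_scope.

Definition S (m : nat) : rat :=
  \sum_(v : {ffun 'I_i -> 'I_N.+1} | (\sum_k (v k : nat) == m)%N) ((\prod_k (v k)`!)%:R)^-1.

Lemma S0 : S 0 = 1.
Proof.
rewrite /S (big_pred1 [ffun => ord0]).
  by rewrite big1 ?invr1 // => k _; rewrite ffunE fact0.
move=> v /=; apply/idP/eqP => [/eqP h|->].
  apply/ffunP => k; rewrite ffunE; apply: val_inj => /=.
  by have := coord_le_sum v k; rewrite h; lia.
by rewrite big1 // => k _; rewrite ffunE.
Qed.

Let h (j : 'I_i) (u : {ffun 'I_i -> 'I_N.+1}) := upd u j (u j).+1.
Let h' (j : 'I_i) (v : {ffun 'I_i -> 'I_N.+1}) := upd v j (v j).-1.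

Lemma hh' j (u : {ffun 'I_i -> 'I_N.+1}) : (u j < N)%N -> h' j (h j u) = u.
Proof.
move=> hu; rewrite /h /h' upd_upd upd_j //=; exact: upd_same.
Qed.

Lemma h'h j (v : {ffun 'I_i -> 'I_N.+1}) : (0 < v j)%N -> h j (h' j v) = v.
Proof.
move=> hv; rewrite /h /h' upd_upd upd_j ?prednK //; first exact: upd_same.
by have := ltn_ord (v j); lia.
Qed.

Lemma Sj (m : nat) (j : 'I_i) : (m < N)%N ->
  \sum_(v : {ffun 'I_i -> 'I_N.+1} | (\sum_k (v k : nat) == m.+1)%N)
     (v j)%:R * ((\prod_k (v k)`!)%:R)^-1 = S m.
Proof.
move=> mN.
rewrite (bigID (fun v : {ffun 'I_i -> 'I_N.+1} => (0 < v j)%N)) /=.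
rewrite [X in _ + X]big1 ?addr0; last first.
  by move=> v /andP [_]; rewrite -eqn0Ngt => /eqP ->; rewrite mul0r.
rewrite (eq_bigr (fun v => ((\prod_k (h' j v k)`!)%:R)^-1)); last first.
  move=> v /andP [_ vpos].
  have xN : ((v j).-1 <= N)%N by have := ltn_ord (v j); lia.
  have hp := prod_upd v j xN.
  have hf : (v j)`! = (v j * (v j).-1`!)%N by rewrite -{1}(prednK vpos) factS prednK.
  rewrite hf mulnA in hp.
  have hp2 : (\prod_k (v k)`! = \prod_k (h' j v k)`! * v j)%N.
    by apply/eqP; rewrite -(eqn_pmul2r (fact_gt0 (v j).-1)) -hp.
  rewrite hp2 natrM invfM mulrA mulrC mulrA mulVf ?mul1r //.
    by rewrite pnatr_eq0 -lt0n.
rewrite (reindex_onto (h j) (h' j)); last by move=> v /andP [_ vpos]; exact: h'h.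
apply: eq_big => u; last by move=> /andP [_ /eqP ->].
case: (ltnP (u j) N) => [ujN | ujN].
  rewrite hh' // eqxx andbT /h upd_j //= andbT.
  have hs := sum_upd u j ujN.
  by rewrite -(eqn_add2r (u j)) hs addnS addSn eqSS eqn_add2r.
have -> : ((\sum_k (u k : nat)) == m)%N = false.
  apply/negbTE; rewrite neq_ltn; apply/orP; right.
  exact: leq_trans mN (leq_trans ujN (coord_le_sum u j)).
have -> : ((h j u j : nat) = 0)%N.
  by rewrite /h /upd ffunE eqxx /inord val_insubd ltnS ltnNge ujN.
by rewrite andbF andFb.
Qed.

Lemma S_step m : (m < N)%N -> (m.+1)%:R * S m.+1 = i%:R * S m.
Proof.
move=> mN; rewrite {1}/S mulr_sumr.
rewrite (eq_bigr (fun v : {ffun 'I_i -> 'I_N.+1} => \sum_j (v j)%:R * ((\prod_k (v k)`!)%:R)^-1)); last first.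
  by move=> v /eqP hv; rewrite -mulr_suml -natr_sum hv.
rewrite exchange_big /=.
rewrite (eq_bigr (fun _ => S m)) => [|j _]; last exact: Sj.
by rewrite sumr_const card_ord mulr_natl.
Qed.

Lemma S_val m : (m <= N)%N -> S m = (i ^ m)%:R / (m`!)%:R.
Proof.
elim: m => [|m IH] hm; first by rewrite S0 fact0 expn0 divr1.
have hs := S_step hm.
have ne : (m.+1)%:R != 0 :> rat by rewrite pnatr_eq0.
have nf : (m`!)%:R != 0 :> rat by rewrite pnatr_eq0 -lt0n fact_gt0.
apply: (mulfI ne); rewrite hs IH; last lia.
rewrite factS expnS !natrM; field.
by move: ne; rewrite nf -natr1 addrC.
Qed.
End SumS.

Lemma sum_multinom n i :
  (\sum_(v : {ffun 'I_i -> 'I_n.+1} | \sum_(j < i) (v j : nat) == n) multinom v <= i ^ n)%N.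
Proof.
rewrite -(ler_nat rat) natr_sum.
apply: (@le_trans _ _ ((n`!)%:R * S n i n)%R).
  rewrite /S mulr_sumr; apply: ler_sum => v _.
  have pp : (0 < (\prod_k (v k)`!)%:R :> rat)%R by rewrite ltr0n prod_gt0.
  rewrite ler_pdivlMr // -natrM ler_nat /multinom.
  exact: leq_trunc_div.
rewrite S_val // mulrC -mulrA mulVf ?mulr1 //.
by rewrite pnatr_eq0 -lt0n fact_gt0.
Qed.

Lemma F_le n i' : (F n i'.+1 <= (n`! %/ Bf i'.+1 n) * i'.+1 ^ n)%N.
Proof.
rewrite /F.
apply: (@leq_trans (\sum_(v : {ffun 'I_i'.+1 -> 'I_n.+1} | \sum_(j < i'.+1) (v j : nat) == n)
          multinom v * (n`! %/ Bf i'.+1 n))).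
  apply: leq_sum => v /eqP hv; rewrite expnS expn1 leq_mul2l; apply/orP; right.
  rewrite /multinom; apply: leq_div2l; first exact: Bf_gt0.
  exact: B1.
by rewrite -big_distrl /= mulnC leq_mul2l sum_multinom orbT.
Qed.


Lemma factE' n : n`! = Factorial.fact n.
Proof. elim: n => [//|n IH]; by rewrite factS IH. Qed.

Lemma expE' m n : (m ^ n)%N = Nat.pow m n.
Proof. elim: n => [//|n IH]; by rewrite expnS IH -multE. Qed.

Lemma comb_final n i' : exists D q r : nat,
  Peano.le (F n i'.+1) (Nat.mul D (Nat.pow i'.+1 n)) /\
  Peano.le (Nat.mul D (Nat.mul (Nat.pow (Factorial.fact q) i'.+1) (Nat.pow q.+1 r))) (Factorial.fact n) /\
  n = Nat.add (Nat.mul q i'.+1) r /\ Peano.lt r i'.+1.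
Proof.
exists (n`! %/ Bf i'.+1 n), (n %/ i'.+1), (n %% i'.+1).
rewrite -!expE' -!factE' !multE plusE.
have hn : n = (n %/ i'.+1 * i'.+1 + n %% i'.+1)%N by rewrite -divn_eq.
have hB : Bf i'.+1 n = ((n %/ i'.+1)`! ^ i'.+1 * (n %/ i'.+1).+1 ^ (n %% i'.+1))%N.
  by rewrite {1}hn Bf_val // ltnW // ltn_mod.
split; first by apply/ssrnat.leP; exact: F_le.
split; first by apply/ssrnat.leP; rewrite -hB leq_trunc_div.
split; first exact: hn.
by apply/ssrnat.ltP; rewrite ltn_mod.
Qed.

End Comb.

Theorem lemmal : forall n i : nat,
  (0 < n)%nat -> (0 < i)%nat -> ((2 * i) ^ 100 <= n)%nat ->
  INR (F n i) <= (INR i) ^ (2 * n + i) / Rpower (INR n) ((INR i - 1) / 2).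
Proof.
intros n i Hn Hi Hb.
destruct i as [|i']; [lia|].
destruct (Comb.comb_final n i') as [D [q [r [HF [HD [Hn' Hr]]]]]].
assert (HN : 0 < INR n) by (apply lt_0_INR; exact Hn).
assert (X0 : 0 < Rpower (INR n) ((INR (S i') - 1) / 2)) by (unfold Rpower; apply exp_pos).
set (X := Rpower (INR n) ((INR (S i') - 1) / 2)) in *.
destruct i' as [|i''].
- assert (r = 0)%nat by lia. subst r.
  assert (Hq : q = n) by lia. subst q.
  assert (HX : X = 1) by (unfold X; replace ((INR 1 - 1) / 2) with 0 by (simpl; field); apply Rpower_O; exact HN).
  rewrite HX, pow1. unfold Rdiv. rewrite Rinv_1, Rmult_1_r.
  assert (D <= 1)%nat.
  { destruct D as [|[|D]]; [lia|lia|].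
    exfalso. simpl in HD. pose proof (lt_O_fact n). nia. }
  replace 1 with (INR 1) by reflexivity. apply le_INR. rewrite Nat.pow_1_l in HF. lia.
- set (i := S (S i'')) in *.
  assert (Hi2 : (2 <= i)%nat) by (unfold i; lia).
  assert (Hin : (i <= n)%nat).
  { apply Nat.le_trans with ((2*i)^100)%nat; [|exact Hb].
    rewrite (Nat.pow_succ_r' (2*i) 99).
    assert (1 <= (2*i)^99)%nat by (apply Nat.neq_0_lt_0, Nat.pow_nonzero; lia). nia. }
  assert (Hq : (1 <= q)%nat).
  { destruct q; [|lia]. simpl in Hn'. lia. }
  pose proof (Ana.final_alg n i q r D (F n i) Hi2 Hq Hn' Hr HF HD) as FA.
  assert (EX : X ^ 2 = INR n ^ (i - 1)).
  { unfold X. rewrite <- Rpower_pow by exact X0.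
    rewrite Rpower_mult. rewrite <- Rpower_pow by exact HN. f_equal.
    rewrite minus_INR by lia. simpl INR. field. }
  assert (Hpos : 0 <= INR i ^ (2 * n + i)) by (apply pow_le; apply pos_INR).
  unfold Rdiv. apply Rmult_le_reg_r with X; [exact X0|].
  rewrite Rmult_assoc, Rinv_l, Rmult_1_r by lra.
  apply Rsqr_incr_0_var; [|exact Hpos].
  replace (Rsqr (INR (F n i) * X)) with (INR (F n i) ^ 2 * X ^ 2) by (unfold Rsqr; ring).
  replace (Rsqr (INR i ^ (2 * n + i))) with ((INR i ^ (2 * n + i)) ^ 2) by (unfold Rsqr; ring).
  rewrite EX. exact FA.
Qed.
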